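(* Let $P$ be a finite set of points in the plane in general position (no three collinear) with $|P|$ even, and let $M$ be a pairwise crossing perfect matching on $P$. Then $M$ is a maximum-length perfect matching on $P$, i.e., $w(M)\geqslant w(M')$ for every perfect matching $M'$ on $P$.
   Context: A perfect matching on $P$ is a partition of $P$ into pairs, each pair $\{a,b\}$ regarded as the straight-line segment $ab$. A perfect matching is pairwise crossing if every two of its segments cross each other. For a set $E$ of segments, $w(E)$ is the sum of the Euclidean lengths of its segments. *)

(* Defs.v *)
From Stdlib Require Import Reals List Permutation.
Open Scope R_scope.

Definition point := (R * R)%type.

Definition orient (a b c : point) : R :=
  (fst b - fst a) * (snd c - snd a) - (snd b - snd a) * (fst c - fst a).

Definition collinear (a b c : point) : Prop := orient a b c = 0.

Definition general_position (P : list point) : Prop :=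
  forall a b c, In a P -> In b P -> In c P ->
    a <> b -> a <> c -> b <> c -> ~ collinear a b c.

Fixpoint endpoints (M : list (point * point)) : list point :=
  match M with
  | nil => nil
  | (a, b) :: M' => a :: b :: endpoints M'
  end.

(* M is a perfect matching on P: a partition of P into pairs, i.e. the
   list of endpoints of the pairs of M is a rearrangement of P (P has
   no duplicates). *)
Definition perfect_matching (P : list point) (M : list (point * point)) : Prop :=
  Permutation (endpoints M) P.

Definition on_segment (p a b : point) : Prop :=
  exists t, 0 <= t <= 1 /\
    p = ((1 - t) * fst a + t * fst b, (1 - t) * snd a + t * snd b).

Definition segments_cross (s1 s2 : point * point) : Prop :=
  exists p, on_segment p (fst s1) (snd s1) /\ on_segment p (fst s2) (snd s2).

Definition pairwise_crossing (M : list (point * point)) : Prop :=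
  forall i j, (i < length M)%nat -> (j < length M)%nat -> i <> j ->
    segments_cross (nth i M ((0,0),(0,0))) (nth j M ((0,0),(0,0))).

Definition dist (a b : point) : R :=
  sqrt ((fst a - fst b) ^ 2 + (snd a - snd b) ^ 2).

Definition weight (M : list (point * point)) : R :=
  fold_right (fun s acc => dist (fst s) (snd s) + acc) 0 M.

(* Main.v *)
Require Import Defs.
From Stdlib Require Import Reals List Permutation Arith Lra Lia Psatz.
From Stdlib Require Import Sorting.Sorted.
Import ListNotations.
Open Scope R_scope.

Definition dot (u v : point) : R := fst u * fst v + snd u * snd v.
Definition UU (x : point) : Prop := fst x ^ 2 + snd x ^ 2 = 1 /\ 0 <= snd x.
Definition Rd (a b : point) : Prop := fst b <= fst a.

Lemma cross_nonneg (u z : point) : UU u -> UU z -> fst z <= fst u ->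
  0 <= fst u * snd z - snd u * fst z.
Proof.
  destruct u as [u1 u2], z as [z1 z2]; unfold UU; simpl.
  intros [Hu Hu2] [Hz Hz2] H.
  destruct (Rle_dec 0 z1).
  - assert (z1 * z1 <= u1 * u1) by nra.
    assert (u2 <= z2) by nra. nra.
  - destruct (Rle_dec 0 u1).
    + nra.
    + assert (u1 * u1 <= z1 * z1) by nra.
      assert (z2 <= u2) by nra. nra.
Qed.

Lemma stepA (x y z : point) : UU x -> UU y -> UU z ->
  fst z <= fst y -> fst y <= fst x -> dot z x <= dot z y.
Proof.
  intros Hx Hy Hz H1 H2.
  pose proof (cross_nonneg y z Hy Hz H1) as Cy.
  pose proof (cross_nonneg x z Hx Hz (Rle_trans _ _ _ H1 H2)) as Cx.
  destruct x as [x1 x2], y as [y1 y2], z as [z1 z2]; unfold UU, dot in *; cbn [fst snd] in *.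
  destruct Hx as [Hx Hx2], Hy as [Hy Hy2], Hz as [Hz Hz2].
  destruct (Rlt_dec 0 (x2 + y2)) as [Hp|Hp].
  - assert (E : (z1 * y1 + z2 * y2 - (z1 * x1 + z2 * x2)) * (x2 + y2) =
                (x1 - y1) * ((x1 * z2 - x2 * z1) + (y1 * z2 - y2 * z1)) + z2 * ((y1^2 + y2^2) - (x1^2 + x2^2))) by ring.
    rewrite Hx, Hy in E.
    assert (0 <= (z1 * y1 + z2 * y2 - (z1 * x1 + z2 * x2)) * (x2 + y2)) by (rewrite E; nra).
    nra.
  - assert (x2 = 0) by lra. assert (y2 = 0) by lra. subst.
    assert (Hx1 : x1 = 1 \/ x1 = -1).
    { assert (Hm : (x1 - 1) * (x1 + 1) = 0) by nra.
      destruct (Rmult_integral _ _ Hm); [left|right]; lra. }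
    assert (Hy1 : y1 = 1 \/ y1 = -1).
    { assert (Hm : (y1 - 1) * (y1 + 1) = 0) by nra.
      destruct (Rmult_integral _ _ Hm); [left|right]; lra. }
    destruct Hx1 as [-> | ->]; destruct Hy1 as [-> | ->]; lra.
Qed.

Definition refl (p : point) : point := (- fst p, snd p).
Lemma UU_refl p : UU p -> UU (refl p).
Proof. unfold UU, refl; cbn [fst snd]; intros [H1 H2]; split; [rewrite <- H1; ring | exact H2]. Qed.

Lemma stepB x y z : UU x -> UU y -> UU z -> fst y <= fst x -> fst x <= fst z -> dot z y <= dot z x.
Proof.
  intros Hx Hy Hz H1 H2.
  pose proof (stepA (refl y) (refl x) (refl z) (UU_refl _ Hy) (UU_refl _ Hx) (UU_refl _ Hz)) as H.
  unfold refl, dot in *; simpl in *.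
  assert (E1: -fst z <= -fst x) by lra. assert (E2 : -fst x <= -fst y) by lra.
  specialize (H E1 E2). nra.
Qed.
Fixpoint TV (f : point -> R) (l : list point) : R :=
  match l with
  | [] => 0
  | x :: l' => match l' with [] => 0 | y :: _ => Rabs (f y - f x) end + TV f l'
  end.

Definition hd_term (f : point -> R) (x : point) (l : list point) : R :=
  match l with [] => 0 | y :: _ => Rabs (f y - f x) end.

Lemma TV_cons2 f a b r : TV f (a :: b :: r) = Rabs (f b - f a) + TV f (b :: r).
Proof. reflexivity. Qed.

Lemma TV_split f l1 z l2 : TV f (l1 ++ z :: l2) = TV f (l1 ++ [z]) + TV f (z :: l2).
Proof.
  induction l1 as [|a l1 IH].
  - simpl. lra.
  - destruct l1 as [|b l1'].
    + simpl. lra.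
    + cbn [app] in *. rewrite !TV_cons2, IH. ring.
Qed.

Lemma last_indep (y : point) l d d' : last (y :: l) d = last (y :: l) d'.
Proof. revert y; induction l as [|a l IH]; intros y; [reflexivity | exact (IH a)]. Qed.

Lemma TV_lower f x l : Rabs (f (last (x :: l) x) - f x) <= TV f (x :: l).
Proof.
  revert x; induction l as [|y l IH]; intros x.
  - simpl. unfold Rminus. rewrite Rplus_opp_r, Rabs_R0. lra.
  - rewrite TV_cons2.
    change (last (x :: y :: l) x) with (last (y :: l) x).
    rewrite (last_indep y l x y).
    specialize (IH y).
    eapply Rle_trans; [|apply Rplus_le_compat_l, IH].
    replace (f (last (y :: l) y) - f x) with ((f y - f x) + (f (last (y :: l) y) - f y)) by ring.
    apply Rabs_triang.
Qed.

Lemma TV_incr z : UU z -> forall l x, StronglySorted Rd (x :: l) ->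
  (forall y, In y (x :: l) -> UU y /\ fst z <= fst y) ->
  TV (dot z) (x :: l) = dot z (last (x :: l) x) - dot z x.
Proof.
  intros Hz l. induction l as [|y l IH]; intros x Hs Hall.
  - simpl. ring.
  - rewrite TV_cons2.
    change (last (x :: y :: l) x) with (last (y :: l) x).
    rewrite (last_indep y l x y).
    inversion Hs as [|? ? Hs' Hf]; subst.
    rewrite (IH y Hs').
    2:{ intros w Hw. apply Hall. right. exact Hw. }
    assert (Hxy : Rd x y) by (inversion Hf; assumption). unfold Rd in Hxy.
    destruct (Hall x (or_introl eq_refl)) as [Ux _].
    destruct (Hall y (or_intror (or_introl eq_refl))) as [Uy Hzy].
    pose proof (stepA x y z Ux Uy Hz Hzy Hxy).
    rewrite Rabs_right by lra. ring.
Qed.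

Lemma TV_decr z : UU z -> forall l x, StronglySorted Rd (x :: l) ->
  (forall y, In y (x :: l) -> UU y /\ fst y <= fst z) ->
  TV (dot z) (x :: l) = dot z x - dot z (last (x :: l) x).
Proof.
  intros Hz l. induction l as [|y l IH]; intros x Hs Hall.
  - simpl. ring.
  - rewrite TV_cons2.
    change (last (x :: y :: l) x) with (last (y :: l) x).
    rewrite (last_indep y l x y).
    inversion Hs as [|? ? Hs' Hf]; subst.
    rewrite (IH y Hs').
    2:{ intros w Hw. apply Hall. right. exact Hw. }
    assert (Hxy : Rd x y) by (inversion Hf; assumption). unfold Rd in Hxy.
    destruct (Hall x (or_introl eq_refl)) as [Ux Hxz].
    destruct (Hall y (or_intror (or_introl eq_refl))) as [Uy Hzy].
    pose proof (stepB x y z Ux Uy Hz Hxy Hxz).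
    rewrite Rabs_left1 by lra. ring.
Qed.

Lemma TV_scale f g c l : (forall p, f p = c * g p) -> TV f l = Rabs c * TV g l.
Proof.
  intros H. induction l as [|x l IH].
  - simpl; ring.
  - simpl TV. rewrite IH. destruct l as [|y l'].
    + ring.
    + rewrite !H. replace (c * g y - c * g x) with (c * (g y - g x)) by ring.
      rewrite Rabs_mult. ring.
Qed.

Lemma SS_app {A} (R : A -> A -> Prop) l1 l2 : StronglySorted R l1 -> StronglySorted R l2 ->
  (forall a b, In a l1 -> In b l2 -> R a b) -> StronglySorted R (l1 ++ l2).
Proof.
  induction l1 as [|a l1 IH]; intros H1 H2 H; simpl; auto.
  inversion H1; subst. constructor.
  - apply IH; auto. intros; apply H; simpl; auto.
  - apply Forall_app; split; auto. apply Forall_forall; intros; apply H; simpl; auto.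
Qed.

Lemma SS_app_inv {A} (R : A -> A -> Prop) l1 l2 : StronglySorted R (l1 ++ l2) ->
  StronglySorted R l1 /\ StronglySorted R l2 /\ (forall a b, In a l1 -> In b l2 -> R a b).
Proof.
  induction l1 as [|a l1 IH]; intros H; simpl in *.
  - split; [constructor|split; auto; intros a b []].
  - inversion H as [|? ? H2 H3]; subst. destruct (IH H2) as (? & ? & ?).
    apply Forall_app in H3 as [Hf1 Hf2].
    split; [constructor; auto|split; auto].
    intros x y [<-|Hx] Hy; [rewrite Forall_forall in Hf2; auto| auto].
Qed.

Fixpoint ins (x : point) (l : list point) : list point :=
  match l with
  | [] => [x]
  | y :: l' => if Rle_dec (fst y) (fst x) then x :: y :: l' else y :: ins x l'
  end.

Lemma ins_In x l z : In z (ins x l) <-> x = z \/ In z l.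
Proof.
  induction l as [|y l IH]; simpl.
  - tauto.
  - destruct (Rle_dec (fst y) (fst x)); simpl; [tauto|]. rewrite IH. tauto.
Qed.

Lemma ins_SS x l : StronglySorted Rd l -> StronglySorted Rd (ins x l).
Proof.
  induction l as [|y l IH]; intros H; simpl.
  - constructor; constructor.
  - inversion H as [|? ? Hl Hf]; subst.
    destruct (Rle_dec (fst y) (fst x)) as [Hle|Hnle].
    + constructor; auto. constructor; [exact Hle|].
      rewrite Forall_forall in *. intros w Hw. specialize (Hf w Hw). unfold Rd in *; lra.
    + constructor; auto. rewrite Forall_forall in *. intros w Hw.
      apply ins_In in Hw as [<-|Hw]; auto. unfold Rd; lra.
Qed.

Lemma sort_ex (l : list point) : exists S, (forall z, In z S <-> In z l) /\ StronglySorted Rd S.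
Proof.
  induction l as [|x l [S [HS HSs]]].
  - exists []; split; [tauto|constructor].
  - exists (ins x S); split; [intros z; rewrite ins_In, HS; simpl; tauto | apply ins_SS; auto].
Qed.

Definition nrm (v : point) : R := sqrt (fst v ^ 2 + snd v ^ 2).
Definition dir (v : point) : point :=
  if Req_EM_T (nrm v) 0 then (1, 0)
  else if Rle_dec 0 (snd v) then (fst v / nrm v, snd v / nrm v)
  else (- fst v / nrm v, - snd v / nrm v).

Lemma dir_prop v : UU (dir v) /\ exists c, Rabs c = nrm v /\ forall p, dot v p = c * dot (dir v) p.
Proof.
  unfold dir. destruct v as [v1 v2]. cbn [fst snd].
  assert (Hs : 0 <= v1 ^ 2 + v2 ^ 2) by nra.
  assert (Hr : nrm (v1, v2) * nrm (v1, v2) = v1 ^ 2 + v2 ^ 2)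
    by (unfold nrm; cbn [fst snd]; apply sqrt_sqrt; exact Hs).
  assert (Hr0 : 0 <= nrm (v1,v2)) by (apply sqrt_pos).
  destruct (Req_EM_T (nrm (v1, v2)) 0) as [E|E].
  - rewrite E in Hr.
    assert (v1 = 0) by (apply Rsqr_0_uniq; unfold Rsqr; nra).
    assert (v2 = 0) by (apply Rsqr_0_uniq; unfold Rsqr; nra).
    subst. split.
    + unfold UU; cbn [fst snd]; split; [ring|lra].
    + exists 0. split; [rewrite Rabs_R0; lra|]. intros p; unfold dot; cbn [fst snd]; ring.
  - assert (Hp : 0 < nrm (v1, v2)) by (destruct Hr0 as [h|h]; [exact h| exfalso; apply E; symmetry; exact h]).
    destruct (Rle_dec 0 v2) as [Hv|Hv].
    + split.
      * unfold UU; cbn [fst snd]; split.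
        -- replace ((v1 / nrm (v1, v2)) ^ 2 + (v2 / nrm (v1, v2)) ^ 2) with ((v1^2 + v2^2) / (nrm (v1, v2) * nrm (v1, v2))) by (field; exact E).
           rewrite <- Hr. field. exact E.
        -- unfold Rdiv; apply Rmult_le_pos; [lra | left; apply Rinv_0_lt_compat; lra].
      * exists (nrm (v1, v2)). split; [apply Rabs_right; lra|].
        intros p; unfold dot; cbn [fst snd]. field. exact E.
    + split.
      * unfold UU; cbn [fst snd]; split.
        -- replace ((- v1 / nrm (v1, v2)) ^ 2 + (- v2 / nrm (v1, v2)) ^ 2) with ((v1^2 + v2^2) / (nrm (v1, v2) * nrm (v1, v2))) by (field; exact E).
           rewrite <- Hr. field. exact E.
        -- unfold Rdiv; apply Rmult_le_pos; [lra | left; apply Rinv_0_lt_compat; lra].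
      * exists (- nrm (v1, v2)). split; [rewrite Rabs_Ropp; apply Rabs_right; lra|].
        intros p; unfold dot; cbn [fst snd]. field. exact E.
Qed.
Definition e1 : point := (1,0).
Definition e1m : point := (-1,0).

Lemma chain_split S z : In z S -> exists S1 S2, e1 :: S ++ [e1m] = (e1 :: S1) ++ z :: (S2 ++ [e1m]).
Proof. intros Hz. destruct (in_split z S Hz) as [S1 [S2 ->]]. exists S1, S2. simpl. rewrite <- app_assoc. reflexivity. Qed.

Lemma UU_e1 : UU e1. Proof. unfold UU, e1; cbn [fst snd]; split; [ring|lra]. Qed.
Lemma UU_e1m : UU e1m. Proof. unfold UU, e1m; cbn [fst snd]; split; [ring|lra]. Qed.

Lemma chain_U S : (forall w, In w S -> UU w) -> forall w, In w (e1 :: S ++ [e1m]) -> UU w.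
Proof.
  intros H w [<-|Hw]; [apply UU_e1|]. apply in_app_or in Hw as [Hw|[<-|[]]]; auto. apply UU_e1m.
Qed.

Lemma chain_parts S z : StronglySorted Rd (e1 :: S ++ [e1m]) -> (forall w, In w S -> UU w) -> In z S ->
  exists S1 S2,
   TV (dot z) (e1 :: S ++ [e1m]) = TV (dot z) (e1 :: S1 ++ [z]) + TV (dot z) (z :: S2 ++ [e1m]) /\
   StronglySorted Rd (e1 :: S1 ++ [z]) /\ StronglySorted Rd (z :: S2 ++ [e1m]) /\
   (forall y, In y (e1 :: S1 ++ [z]) -> UU y /\ fst z <= fst y) /\
   (forall y, In y (z :: S2 ++ [e1m]) -> UU y /\ fst y <= fst z) /\
   last (e1 :: S1 ++ [z]) e1 = z /\ last (z :: S2 ++ [e1m]) z = e1m.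
Proof.
  intros Hs HU Hz.
  pose proof (chain_U S HU) as HC.
  destruct (chain_split S z Hz) as [S1 [S2 E]].
  rewrite E in Hs, HC. exists S1, S2.
  assert (Uz : UU z) by auto.
  apply SS_app_inv in Hs as [Hs1 [Hs2 Hx]].
  split; [rewrite E, TV_split; reflexivity|].
  split.
  { change (e1 :: S1 ++ [z]) with ((e1 :: S1) ++ [z]). apply SS_app; auto.
    - repeat constructor.
    - intros a b Ha [<-|[]]. apply Hx; [exact Ha| left; reflexivity]. }
  split; [exact Hs2|].
  split.
  { change (e1 :: S1 ++ [z]) with ((e1 :: S1) ++ [z]). intros y Hy.
    apply in_app_or in Hy as [Hy|[<-|[]]].
    - split; [apply HC; apply in_or_app; left; exact Hy|].
      apply (Hx y z Hy (or_introl eq_refl)).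
    - split; [exact Uz|lra]. }
  split.
  { intros y Hy. split; [apply HC; apply in_or_app; right; exact Hy|].
    inversion Hs2 as [|? ? _ Hf]; subst. destruct Hy as [<-|Hy]; [lra|].
    rewrite Forall_forall in Hf. apply (Hf y Hy). }
  split.
  - change (e1 :: S1 ++ [z]) with ((e1 :: S1) ++ [z]). apply last_last.
  - change (z :: S2 ++ [e1m]) with ((z :: S2) ++ [e1m]). apply last_last.
Qed.

Lemma upper S z : StronglySorted Rd (e1 :: S ++ [e1m]) -> (forall w, In w S -> UU w) -> In z S ->
  TV (dot z) (e1 :: S ++ [e1m]) = 2.
Proof.
  intros Hs HU Hz.
  assert (Uz : UU z) by auto.
  destruct (chain_parts S z Hs HU Hz) as (S1 & S2 & E & Ss1 & Ss2 & A1 & A2 & L1 & L2).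
  rewrite E, (TV_incr z Uz _ _ Ss1 A1), (TV_decr z Uz _ _ Ss2 A2), L1, L2.
  destruct Uz as [U1 U2]. unfold dot, e1, e1m. cbn [fst snd]. nra.
Qed.

Lemma lower S z v : In z S -> 2 * Rabs (dot v z) <= TV (dot v) (e1 :: S ++ [e1m]).
Proof.
  intros Hz.
  destruct (chain_split S z Hz) as [S1 [S2 E]].
  rewrite E, TV_split.
  pose proof (TV_lower (dot v) e1 (S1 ++ [z])) as H1.
  pose proof (TV_lower (dot v) z (S2 ++ [e1m])) as H2.
  replace (last (e1 :: S1 ++ [z]) e1) with z in H1
    by (symmetry; change (e1 :: S1 ++ [z]) with ((e1 :: S1) ++ [z]); apply last_last).
  replace (last (z :: S2 ++ [e1m]) z) with e1m in H2
    by (symmetry; change (z :: S2 ++ [e1m]) with ((z :: S2) ++ [e1m]); apply last_last).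
  change ((e1 :: S1) ++ [z]) with (e1 :: S1 ++ [z]).
  assert (Hm : dot v e1m = - dot v e1) by (unfold dot, e1, e1m; cbn [fst snd]; ring).
  rewrite Hm in H2.
  revert H1 H2. unfold Rabs; repeat destruct Rcase_abs; lra.
Qed.
Definition Sm (F : point * point -> R) (L : list (point * point)) : R :=
  fold_right (fun s acc => F s + acc) 0 L.
Definition sumP (f : point -> R) (l : list point) : R :=
  fold_right (fun p acc => f p + acc) 0 l.

Lemma Sm_ext F G L : (forall s, F s = G s) -> Sm F L = Sm G L.
Proof. intros H; induction L as [|a L IH]; simpl; [reflexivity|]. rewrite H, IH; reflexivity. Qed.
Lemma Sm_ext_in F G L : (forall s, In s L -> F s = G s) -> Sm F L = Sm G L.
Proof. intros H; induction L as [|a L IH]; simpl; [reflexivity|]. rewrite H, IH; auto; [intros; apply H; simpl; auto | simpl; auto]. Qed.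
Lemma Sm_plus F G L : Sm (fun s => F s + G s) L = Sm F L + Sm G L.
Proof. induction L as [|a L IH]; simpl; [ring|]. rewrite IH; ring. Qed.
Lemma Sm_zero L : Sm (fun _ => 0) L = 0.
Proof. induction L as [|a L IH]; simpl; [reflexivity|]. rewrite IH; ring. Qed.
Lemma Sm_le F G L : (forall s, In s L -> F s <= G s) -> Sm F L <= Sm G L.
Proof. intros H; induction L as [|a L IH]; simpl; [lra|].
  apply Rplus_le_compat; [apply H; simpl; auto| apply IH; intros; apply H; simpl; auto]. Qed.
Lemma Sm_le_l c F G L : (forall s, In s L -> c * F s <= G s) -> c * Sm F L <= Sm G L.
Proof. intros H; induction L as [|a L IH]; simpl; [lra|]. rewrite Rmult_plus_distr_l.
  apply Rplus_le_compat; [apply H; simpl; auto| apply IH; intros; apply H; simpl; auto]. Qed.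
Lemma Sm_le_r c F G L : (forall s, In s L -> G s <= c * F s) -> Sm G L <= c * Sm F L.
Proof. intros H; induction L as [|a L IH]; simpl; [lra|]. rewrite Rmult_plus_distr_l.
  apply Rplus_le_compat; [apply H; simpl; auto| apply IH; intros; apply H; simpl; auto]. Qed.

Lemma Sm_endpoints f M : Sm (fun s => f (fst s) + f (snd s)) M = sumP f (endpoints M).
Proof. induction M as [|[x y] M IH]; simpl; [reflexivity|]. unfold sumP in *; simpl. rewrite IH; ring. Qed.

Lemma sumP_perm f l1 l2 : Permutation l1 l2 -> sumP f l1 = sumP f l2.
Proof.
  intros H; induction H; unfold sumP in *; simpl; try reflexivity.
  - rewrite IHPermutation; reflexivity.
  - ring.
  - rewrite IHPermutation1; exact IHPermutation2.
Qed.

Definition hf (a b : R) (p : point) : R := a * fst p + b * snd p.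
Definition mn a b (s : point * point) := Rmin (hf a b (fst s)) (hf a b (snd s)).
Definition mx a b (s : point * point) := Rmax (hf a b (fst s)) (hf a b (snd s)).

Lemma cross_minmax a b M : pairwise_crossing M -> forall s1 s2, In s1 M -> In s2 M -> mn a b s1 <= mx a b s2.
Proof.
  intros HM s1 s2 H1 H2.
  destruct (In_nth M s1 ((0,0),(0,0)) H1) as [i [Hi Ei]].
  destruct (In_nth M s2 ((0,0),(0,0)) H2) as [j [Hj Ej]].
  destruct (Nat.eq_dec i j) as [->|Hij].
  - rewrite Ei in Ej; subst. unfold mn, mx, Rmin, Rmax; destruct Rle_dec; lra.
  - destruct (HM i j Hi Hj Hij) as [p [[t [Ht Hp]] [u [Hu Hq]]]].
    rewrite Ei in Hp. rewrite Ej in Hq.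
    assert (E1 : hf a b p = (1 - t) * hf a b (fst s1) + t * hf a b (snd s1)) by (rewrite Hp; unfold hf; cbn [fst snd]; ring).
    assert (E2 : hf a b p = (1 - u) * hf a b (fst s2) + u * hf a b (snd s2)) by (rewrite Hq; unfold hf; cbn [fst snd]; ring).
    unfold mn, mx, Rmin, Rmax; destruct Rle_dec; destruct Rle_dec; nra.
Qed.

Definition Tm (F : point * point -> R) d L := fold_right (fun s acc => Rmax (F s) acc) d L.

Lemma Tm_props F d L : d <= Tm F d L /\ (forall s, In s L -> F s <= Tm F d L) /\
   (Tm F d L = d \/ exists s, In s L /\ Tm F d L = F s).
Proof.
  induction L as [|x L IH].
  - split; [unfold Tm; simpl; lra|split; [intros s []| left; reflexivity]].
  - destruct IH as (IH1 & IH2 & IH3).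
    change (Tm F d (x :: L)) with (Rmax (F x) (Tm F d L)).
    revert IH1 IH2 IH3. generalize (Tm F d L) as T. intros T IH1 IH2 IH3.
    unfold Rmax; destruct (Rle_dec (F x) T) as [Hle|Hnle].
    + split; [lra|split].
      * intros s [<-|Hs]; [lra| apply IH2; auto].
      * destruct IH3 as [->|[s [Hs Es]]]; [left; reflexivity| right; exists s; split; [right; exact Hs| exact Es]].
    + split; [lra| split].
      * intros s [<-|Hs]; [lra| specialize (IH2 s Hs); lra].
      * right; exists x; split; [left; reflexivity| reflexivity].
Qed.

Lemma thr_ex (F G : point*point -> R) (L : list (point*point)) :
  (forall s1 s2, In s1 L -> In s2 L -> F s1 <= G s2) ->
  exists t, forall s, In s L -> F s <= t <= G s.
Proof.
  intros H. destruct L as [|s0 L0].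
  - exists 0; intros s [].
  - destruct (Tm_props F (F s0) L0) as (H1 & H2 & H3).
    exists (Tm F (F s0) L0). intros s Hs. split.
    + destruct Hs as [<-|Hs]; auto.
    + destruct H3 as [->|[s' [Hs' ->]]].
      * apply H; simpl; auto.
      * apply H; simpl; auto.
Qed.

Lemma oneD a b P M M' : perfect_matching P M -> perfect_matching P M' -> pairwise_crossing M ->
  Sm (fun s => Rabs (hf a b (fst s) - hf a b (snd s))) M' <= Sm (fun s => Rabs (hf a b (fst s) - hf a b (snd s))) M.
Proof.
  intros HP HP' HC.
  destruct (thr_ex (mn a b) (mx a b) M (cross_minmax a b M HC)) as [t Ht].
  set (g := fun p => Rabs (hf a b p - t)).
  assert (E : Sm (fun s => Rabs (hf a b (fst s) - hf a b (snd s))) M = Sm (fun s => g (fst s) + g (snd s)) M).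
  { apply Sm_ext_in; intros s Hs. destruct (Ht s Hs) as [H1 H2]. unfold mn, mx in *. unfold g.
    unfold Rmin, Rmax in *. destruct Rle_dec; unfold Rabs; repeat destruct Rcase_abs; lra. }
  rewrite E, Sm_endpoints, (sumP_perm g _ _ HP), <- (sumP_perm g _ _ HP'), <- Sm_endpoints.
  apply Sm_le; intros s _. unfold g.
  unfold Rabs; repeat destruct Rcase_abs; lra.
Qed.

Definition vec (s : point * point) : point := (fst (fst s) - fst (snd s), snd (fst s) - snd (snd s)).

Lemma exchange (M M' : list (point*point)) :
  (forall a b, Sm (fun s => Rabs (hf a b (fst s) - hf a b (snd s))) M' <= Sm (fun s => Rabs (hf a b (fst s) - hf a b (snd s))) M) ->
  forall C, Sm (fun s => TV (dot (vec s)) C) M' <= Sm (fun s => TV (dot (vec s)) C) M.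
Proof.
  intros H1 C. induction C as [|x C IH].
  - rewrite (Sm_ext (fun s => TV (dot (vec s)) []) (fun _ => 0) M'), (Sm_ext (fun s => TV (dot (vec s)) []) (fun _ => 0) M) by reflexivity. rewrite !Sm_zero. lra.
  - rewrite (Sm_ext (fun s => TV (dot (vec s)) (x :: C)) (fun s => hd_term (dot (vec s)) x C + TV (dot (vec s)) C) M'), (Sm_ext (fun s => TV (dot (vec s)) (x :: C)) (fun s => hd_term (dot (vec s)) x C + TV (dot (vec s)) C) M) by reflexivity.
    rewrite !Sm_plus. apply Rplus_le_compat; [|exact IH].
    destruct C as [|y C'].
    + rewrite (Sm_ext (fun s => hd_term (dot (vec s)) x []) (fun _ => 0) M'), (Sm_ext (fun s => hd_term (dot (vec s)) x []) (fun _ => 0) M) by reflexivity. rewrite !Sm_zero. lra.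
    + rewrite (Sm_ext (fun s => hd_term (dot (vec s)) x (y :: C')) (fun s => Rabs (hf (fst y - fst x) (snd y - snd x) (fst s) - hf (fst y - fst x) (snd y - snd x) (snd s))) M'), (Sm_ext (fun s => hd_term (dot (vec s)) x (y :: C')) (fun s => Rabs (hf (fst y - fst x) (snd y - snd x) (fst s) - hf (fst y - fst x) (snd y - snd x) (snd s))) M).
      * apply H1.
      * intros s. unfold hd_term, dot, vec, hf. cbn [fst snd]. apply f_equal. ring.
      * intros s. unfold hd_term, dot, vec, hf. cbn [fst snd]. apply f_equal. ring.
Qed.

Theorem theorem10 (P : list point) (M : list (point * point)) :
  NoDup P ->
  general_position P ->
  Nat.Even (length P) ->
  perfect_matching P M ->
  pairwise_crossing M ->
  forall M' : list (point * point), perfect_matching P M' -> weight M' <= weight M.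
Proof.
  intros HND HGP HEv HPM HPC M' HPM'.
  destruct (sort_ex (map (fun s => dir (vec s)) (M ++ M'))) as [S [HS HSs]].
  assert (HSU : forall z, In z S -> UU z).
  { intros z Hz. apply HS in Hz. apply in_map_iff in Hz as [s [<- _]]. apply dir_prop. }
  assert (HinS : forall s, In s (M ++ M') -> In (dir (vec s)) S).
  { intros s Hs. apply HS. apply in_map_iff. exists s; auto. }
  assert (HCs : StronglySorted Rd (e1 :: S ++ [e1m])).
  { constructor.
    - apply SS_app; auto.
      + repeat constructor.
      + intros a' b' Ha [<-|[]]. destruct (HSU a' Ha) as [U1 U2]. unfold Rd, e1m; cbn [fst snd]. nra.
    - apply Forall_forall. intros w Hw. assert (Hw2 : UU w) by (apply (chain_U S HSU); right; exact Hw). clear Hw. rename Hw2 into Hw.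
      destruct Hw as [U1 U2]. unfold Rd, e1; cbn [fst snd]. nra. }
  set (C := e1 :: S ++ [e1m]).
  assert (Hup : forall s, In s M -> TV (dot (vec s)) C <= 2 * Defs.dist (fst s) (snd s)).
  { intros s Hs. destruct (dir_prop (vec s)) as [Uz [c [Hc Hd]]].
    rewrite (TV_scale _ _ c C Hd), Hc. unfold C. rewrite (upper S); auto.
    - unfold nrm, vec, Defs.dist; cbn [fst snd]. lra.
    - apply HinS, in_or_app; left; exact Hs. }
  assert (Hlo : forall s, In s M' -> 2 * Defs.dist (fst s) (snd s) <= TV (dot (vec s)) C).
  { intros s Hs. destruct (dir_prop (vec s)) as [Uz [c [Hc Hd]]].
    eapply Rle_trans; [|apply (lower S (dir (vec s)) (vec s)); apply HinS, in_or_app; right; exact Hs].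
    rewrite Hd. destruct Uz as [U1 U2].
    replace (dot (dir (vec s)) (dir (vec s))) with 1 by (unfold dot; nra).
    rewrite Rmult_1_r, Hc. unfold nrm, vec, Defs.dist; cbn [fst snd]. lra. }
  pose proof (exchange M M' (fun a b => oneD a b P M M' HPM HPM' HPC) C) as Hex.
  change (weight M') with (Sm (fun s => Defs.dist (fst s) (snd s)) M').
  change (weight M) with (Sm (fun s => Defs.dist (fst s) (snd s)) M).
  apply (Rmult_le_reg_l 2); [lra|].
  eapply Rle_trans; [apply Sm_le_l; exact Hlo|].
  eapply Rle_trans; [exact Hex|].
  apply Sm_le_r. exact Hup.
Qed.
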